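(* Let $(M,d)$ be a metric space and let $S$ be a semitopological semigroup which is left reversible or left amenable. Let $\{T_s:s\in S\}$ be a representation of $S$ on $M$ such that the map $S\times M\ni(s,x)\mapsto T_sx$ is jointly continuous and the family $\{T_s:s\in S\}$ is (as a semigroup under composition) generated by uniformly asymptotically regular mappings. Then every nonempty compact set $K\subset M$ with $T_s(K)\subset K$ for all $s\in S$ contains a common fixed point of all $T_s$, $s\in S$.
   Context: A semitopological semigroup is a semigroup with a Hausdorff topology making $s\mapsto ts$, $s\mapsto st$ continuous for each $t$. A representation: maps $T_s:M\to M$ with $T_{st}=T_s\circ T_t$. $S$ is left reversible if any two closed right ideals of $S$ (sets $I$ with $IS\subset I$) have nonempty intersection. $S$ is left amenable if there is a left invariant mean on $LUC(S)$: with $(l_sf)(t)=f(st)$, $LUC(S)$ is the space of bounded continuous $f$ with $s\mapsto l_sf$ norm-continuous into $C_b(S)$, and a left invariant mean is $\mu\in LUC(S)^*$ with $\|\mu\|=\mu(1)=1$ and $\mu(l_sf)=\mu(f)$. A map $T:M\to M$ is uniformly asymptotically regular if $\lim_n\sup_{x\in M}d(T^{n+1}x,T^nx)=0$. *)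

(* Defs.v *)
From HB Require Import structures.
From mathcomp Require Import all_boot all_order all_algebra.
From mathcomp Require Import all_classical all_reals all_analysis.
Set Implicit Arguments. Unset Strict Implicit. Unset Printing Implicit Defensive.
Import Order.TTheory GRing.Theory Num.Theory.
Local Open Scope classical_set_scope.
Local Open Scope ring_scope.

Definition semitopological_semigroup (S : topologicalType) (mul : S -> S -> S) : Prop :=
  hausdorff_space S /\
  (forall a b c : S, mul a (mul b c) = mul (mul a b) c) /\
  (forall t : S, continuous (fun s => mul t s)) /\
  (forall t : S, continuous (fun s => mul s t)).

Definition closed_right_ideal (S : topologicalType) (mul : S -> S -> S) (I : set S) : Prop :=
  I !=set0 /\ closed I /\ (forall i s, I i -> I (mul i s)).

Definition left_reversible (S : topologicalType) (mul : S -> S -> S) : Prop :=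
  forall I J : set S, closed_right_ideal mul I -> closed_right_ideal mul J ->
    I `&` J !=set0.

Definition ltrans (R : realType) (S : Type) (mul : S -> S -> S) (s : S) (f : S -> R) : S -> R :=
  fun t => f (mul s t).

(* LUC(S): bounded continuous real functions f such that s |-> l_s f is
   continuous into C_b(S) with the sup norm. *)
Definition LUC (R : realType) (S : topologicalType) (mul : S -> S -> S) : set (S -> R) :=
  [set f | (exists c : R, forall t, `|f t| <= c) /\ continuous f /\
     (forall s0 : S, forall e : R, 0 < e ->
        exists2 U : set S, nbhs s0 U &
          forall s, U s -> forall t, `|ltrans mul s f t - ltrans mul s0 f t| <= e)].

(* Since ||1|| = 1, ||mu|| = 1 together
   with mu(1) = 1 is the same as |mu f| <= ||f||_sup on LUC(S) plus mu(1) = 1. *)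
Definition left_invariant_mean (R : realType) (S : topologicalType) (mul : S -> S -> S)
  (mu : (S -> R) -> R) : Prop :=
  (forall (a : R) f g, LUC mul f -> LUC mul g -> mu (fun t => a * f t + g t) = a * mu f + mu g) /\
  (forall f (c : R), LUC mul f -> (forall t, `|f t| <= c) -> `|mu f| <= c) /\
  mu (fun _ => 1) = 1 /\
  (forall s f, LUC mul f -> mu (ltrans mul s f) = mu f).

Definition left_amenable (R : realType) (S : topologicalType) (mul : S -> S -> S) : Prop :=
  exists mu : (S -> R) -> R, left_invariant_mean mul mu.

Definition unif_asymp_regular (R : realType) (M : metricType R) (T : M -> M) : Prop :=
  forall e : R, 0 < e -> exists N : nat, forall n : nat, (N <= n)%N ->
    forall x : M, mdist (iter n.+1 T x) (iter n T x) <= e.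

Inductive gen_semigroup (M : Type) (G : set (M -> M)) : (M -> M) -> Prop :=
| gen_base g : G g -> gen_semigroup G g
| gen_comp f g : gen_semigroup G f -> gen_semigroup G g -> gen_semigroup G (f \o g).

(* Main.v *)
Require Import Defs.
From HB Require Import structures.
From mathcomp Require Import all_boot all_order all_algebra.
From mathcomp Require Import all_classical all_reals all_analysis.
From mathcomp Require Import lra.
Import Order.TTheory GRing.Theory Num.Theory.
Local Open Scope classical_set_scope.
Local Open Scope ring_scope.

Section End_part.
Variables (R : realType) (M : metricType R) (S : Type) (T : S -> M -> M).

Lemma mdist0_le (x y : M) : (forall e : R, 0 < e -> mdist x y <= e) -> x = y.
Proof.
move=> H; apply: mdist_positivity; apply/eqP; rewrite eq_le mdist_ge0 andbT.
by apply/unstable.ler_gtP => e /H.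
Qed.

Lemma end_fix (K0 : set M) :
  (exists G : set (M -> M), (forall g, G g -> unif_asymp_regular g) /\
     [set f | exists s, f = T s] = gen_semigroup G) ->
  K0 !=set0 -> (forall s, K0 `<=` T s @` K0) ->
  exists2 x, K0 x & forall s, T s x = x.
Proof.
move=> [G [Gu Heq]] [y K0y] inv; exists y => // s.
have gfix : forall g, G g -> g y = y.
  move=> g Gg.
  have [s' gs'] : [set f | exists s, f = T s] g by rewrite Heq; exact: gen_base.
  have it : forall n, exists2 x, K0 x & iter n g x = y.
    elim=> [|n [x K0x <-]]; first by exists y.
    have [x' K0x' <-] := inv s' x K0x.
    by exists x' => //; rewrite iterSr gs'.
  apply: mdist0_le => e e0.
  have [N HN] := Gu g Gg e e0.
  have [x _ <-] := it N.
  by rewrite -iterS; exact: HN.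
have : gen_semigroup G (T s) by rewrite -Heq; exists s.
elim=> [g /gfix //| f g _ IHf _ IHg] /=.
by rewrite IHg IHf.
Qed.
End End_part.
Lemma closure_img {X Y : topologicalType} (f : X -> Y) (A : set X) p :
  continuous f -> closure A p -> closure (f @` A) (f p).
Proof.
move=> fc clp B Bp.
have : nbhs p (f @^-1` B) by exact: fc.
move=> /clp [a [Aa Ba]]; exists (f a); split => //; by exists a.
Qed.

Section Rev.
Variables (R : realType) (M : metricType R) (S : topologicalType) (mul : S -> S -> S) (T : S -> M -> M).
Hypothesis Tmul : forall s t : S, T (mul s t) = T s \o T t.
Hypothesis Tcont : continuous (fun p : S * M => T p.1 p.2).

Lemma Tcont_s (z : M) : continuous (fun s => T s z).
Proof.
move=> s.
apply: (@continuous_comp _ _ _ (fun s => (s, z)) (fun p : S * M => T p.1 p.2)); last exact: Tcont.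
by apply: cvg_pair => //=; exact: cvg_cst.
Qed.

Lemma Tcont_z (s : S) : continuous (T s).
Proof.
move=> z.
apply: (@continuous_comp _ _ _ (fun z => (s, z)) (fun p : S * M => T p.1 p.2)); last exact: Tcont.
by apply: cvg_pair => //=; exact: cvg_cst.
Qed.

Lemma rev_K0 (s0 : S) (K : set M) (x : M) :
  semitopological_semigroup mul -> left_reversible mul ->
  K x -> compact K -> (forall s, T s @` K `<=` K) ->
  exists K0 : set M, [/\ K0 `<=` K, K0 !=set0 & forall t, K0 `<=` T t @` K0].
Proof.
move=> [_ [assoc [lc rc]]] rev Kx cK inv.
pose D := closed_right_ideal mul.
pose orb (I : set S) := (fun s => T s x) @` I.
have DT : D setT by split; [exists s0 | split; [exact: closedT|]].
have orbK : forall I, orb I `<=` K by move=> I _ [s _ <-]; apply: (inv s); exists x.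
pose F := filter_from D orb.
have FF : Filter F.
  apply: filter_from_filter; first by exists setT.
  move=> I J DI DJ; exists (I `&` J).
    split; first exact: rev.
    split; first by apply: closedI; [case: DI => _ []|case: DJ => _ []].
    by move=> i s [Ii Ji]; split; [case: DI => _ [_]; apply|case: DJ => _ [_]; apply].
  by move=> _ [s [Is Js] <-]; split; exists s.
have PF : ProperFilter F.
  by apply: filter_from_proper => // I [[s Is] _]; exists (T s x); exists s.
have FK : F K by exists setT.
have [y [Ky cly]] := cK F PF FK.
exists (K `&` cluster F); split => //; first by exists y.
move=> t y' [Ky' cly'].
pose F' := filter_from (fun p : set S * set M => D p.1 /\ nbhs y' p.2)
   (fun p => orb (p.1 `&` [set s | p.2 (T (mul t s) x)])).
have FF' : Filter F'.
  apply: filter_from_filter; first by exists (setT, setT); split => //; exact: filterT.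
  move=> [I U] [J V] [DI nU] [DJ nV]; exists (I `&` J, U `&` V).
    split; last exact: filterI.
    split; first exact: rev.
    split; first by apply: closedI; [case: DI => _ []|case: DJ => _ []].
    by move=> i s [Ii Ji]; split; [case: DI => _ [_]; apply|case: DJ => _ [_]; apply].
  move=> _ [s [[Is Js] /= [Us Vs]] <-]; split; exists s => //.
have PF' : ProperFilter F'.
  apply: filter_from_proper => // -[I U] [DI nU] /=.
  have [V [oV Vy'] VU] : exists2 V, open_nbhs y' V & V `<=` U by move: nU; rewrite nbhsE.
  pose J := closure (mul t @` I).
  have DJ : D J.
    split.
      by case: DI => -[i Ii] _; exists (mul t i); apply: subset_closure; exists i.
    split; first exact: closed_closure.
    move=> j s Jj.
    have := @closure_img _ _ (mul^~ s) _ _ (rc s) Jj.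
    apply: closure_subset => _ [_ [i Ii <-] <-].
    rewrite -assoc; exists (mul i s) => //.
    by case: DI => _ [_]; apply.
  have [_ [[s' Js' <-] Vs']] := cly' (orb J) V (ex_intro2 _ _ J DJ (@subset_refl _ (orb J))) (open_nbhs_nbhs (conj oV Vy')).
  have nB : nbhs s' ((fun s => T s x) @^-1` V) by apply: (Tcont_s x s'); apply: open_nbhs_nbhs.
  have [_ [[i Ii <-] /= Vti]] := Js' _ nB.
  by exists (T i x); exists i => //; split => //=; apply: VU.
have FK' : F' K.
  by exists (setT, setT); [split => //; exact: filterT | exact: orbK].
have [z [Kz clz]] := cK F' PF' FK'.
have clFz : cluster F z.
  move=> A B [I DI sA] nB.
  have F'A : F' (orb (I `&` [set s | setT (T (mul t s) x)])).
    by exists (I, setT) => //; split => //; exact: filterT.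
  have [w [[s [Is _] <-] Bw]] := clz _ _ F'A nB.
  by exists (T s x); split => //; apply: sA; exists s.
exists z => //.
apply: (@metric_hausdorff R M) => A B nA nB.
have nA' : nbhs z (T t @^-1` A) by exact: (Tcont_z t).
have F'B : F' (orb (setT `&` [set s | B (T (mul t s) x)])).
  by exists (setT, B).
have [w [[s [_ Bs] <-] Aw]] := clz _ _ F'B nA'.
exists (T t (T s x)); split => //.
by move: Bs => /=; rewrite Tmul.
Qed.
End Rev.
Section Amen.
Variables (R : realType) (M : metricType R) (S : topologicalType) (mul : S -> S -> S) (T : S -> M -> M).
Hypothesis Tmul : forall s t : S, T (mul s t) = T s \o T t.
Hypothesis Tcont : continuous (fun p : S * M => T p.1 p.2).
Variables (mu : (S -> R) -> R) (K : set M) (x : M).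
Hypothesis lim : left_invariant_mean mul mu.
Hypothesis Kx : K x.
Hypothesis cK : compact K.
Hypothesis inv : forall s, T s @` K `<=` K.

Lemma Tcont_sA (z : M) : continuous (fun s => T s z).
Proof.
move=> s.
apply: (@continuous_comp _ _ _ (fun s => (s, z)) (fun p : S * M => T p.1 p.2)); last exact: Tcont.
by apply: cvg_pair => //=; exact: cvg_cst.
Qed.

Lemma Tcont_zA (s : S) : continuous (T s).
Proof.
move=> z.
apply: (@continuous_comp _ _ _ (fun z => (s, z)) (fun p : S * M => T p.1 p.2)); last exact: Tcont.
by apply: cvg_pair => //=; exact: cvg_cst.
Qed.

Lemma TK s : K (T s x).
Proof. by apply: (inv s); exists x. Qed.

Definition cb (k : M -> R) := continuous (k : M -> R^o) /\ exists c : R, forall z, `|k z| <= c.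
Definition fk (k : M -> R) := fun s => k (T s x).
Definition phi k := mu (fk k).

Lemma cb_lin (a : R) {k1 k2} : cb k1 -> cb k2 -> cb (fun z => a * k1 z + k2 z).
Proof.
move=> [c1 [b1 hb1]] [c2 [b2 hb2]]; split.
  move=> z; apply: cvgD; last exact: c2.
  by apply: cvgMr; exact: c1.
exists (`|a| * b1 + b2) => z.
rewrite (le_trans (ler_normD _ _))// lerD// normrM ler_wpM2l//.
Qed.

Lemma cb_cst (a : R) : cb (fun _ => a).
Proof. by split; [move=> z; exact: cvg_cst | exists `|a|]. Qed.

Lemma cb_comp t {k} : cb k -> cb (k \o T t).
Proof.
move=> [kc [b hb]]; split; last by exists b => z; exact: hb.
by move=> z; exact: (continuous_comp (Tcont_zA t z) (kc (T t z))).
Qed.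

Lemma fk_LUC {k} : cb k -> LUC mul (fk k).
Proof.
move=> [kc [b hb]]; split; first by exists b => t; exact: hb.
split; first by move=> s; apply: continuous_comp; [exact: Tcont_sA | exact: kc].
move=> s0 e e0.
pose h : S * M -> R^o := fun p : S * M => k (T p.1 p.2).
have hc : continuous h by move=> p; apply: continuous_comp; [exact: Tcont | exact: kc].
have cov : nbhs s0 [set s | K `<=` (fun z => `|k (T s z) - k (T s0 z)| <= e)].
  apply: (proj1 (compact_near_coveringP K) cK S (nbhs s0)
   (fun s z => `|k (T s z) - k (T s0 z)| <= e)).
  move=> z Kz.
  have := hc (s0, z); move/cvgrPdist_lt => /(_ (e / 2)).
  have e2 : 0 < e / 2 by rewrite divr_gt0.
  move=> /(_ e2) [[A1 A2] /= [nA1 nA2] sub].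
  exists (A2, A1) => //= -[z' s] /= [A2z' A1s].
  have h1 := sub (s, z') (conj A1s A2z').
  have h2 := sub (s0, z') (conj (nbhs_singleton nA1) A2z').
  rewrite /h /= in h1 h2.
  rewrite -[k (T s z') - _](subrKA (k (T s0 z))).
  rewrite (le_trans (ler_normD _ _))// [e](splitr e) lerD// ltW//.
    by rewrite distrC.
exists [set s | K `<=` (fun z => `|k (T s z) - k (T s0 z)| <= e)] => // s Us t.
rewrite /ltrans /fk !Tmul /=.
by apply: Us => //; exact: TK.
Qed.

Lemma phi_lin a {k1 k2} : cb k1 -> cb k2 ->
  phi (fun z => a * k1 z + k2 z) = a * phi k1 + phi k2.
Proof. move=> h1 h2; exact (proj1 lim a _ _ (fk_LUC h1) (fk_LUC h2)). Qed.

Lemma phi0 : phi (fun _ => 0) = 0.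
Proof.
have := proj1 (proj2 lim) (fk (fun _ => 0)) 0 (fk_LUC (cb_cst 0)).
have bd : forall t, `|fk (fun _ : M => 0) t| <= 0 by move=> t; rewrite /fk normr0.
by move=> /(_ bd); rewrite normr_le0 => /eqP.
Qed.

Lemma phi1 : phi (fun _ => 1) = 1.
Proof. exact: (proj1 (proj2 (proj2 lim))). Qed.

Lemma phi_cst a : phi (fun _ => a) = a.
Proof.
transitivity (phi (fun z => a * (fun _ : M => 1) z + (fun _ : M => 0) z)).
  by congr phi; apply: funext => z; rewrite mulr1 addr0.
by rewrite phi_lin ?phi1 ?phi0 ?mulr1 ?addr0 //; exact: cb_cst.
Qed.

Lemma phi_ge0 {k} : cb k -> (forall z, K z -> 0 <= k z) -> 0 <= phi k.
Proof.
move=> hk pos; have [_ [c hc]] := hk.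
have hg := cb_lin (- (c / 2)) (cb_cst 1) hk.
have := proj1 (proj2 lim) _ (c / 2) (fk_LUC hg).
have bd : forall t, `|fk (fun z => - (c / 2) * (fun _ => 1) z + k z) t| <= c / 2.
  move=> t; rewrite /fk /= mulr1.
  have h0 := pos _ (TK t); have h1 := hc (T t x); rewrite ger0_norm in h1 => //.
  rewrite ler_norml; apply/andP; split; lra.
move=> /(_ bd); rewrite -/(phi _) phi_lin ?phi1; last 2 first.
  exact: cb_cst.
  exact: hk.
rewrite ler_norml => /andP [h _]; lra.
Qed.

Lemma phi_le {k1 k2} : cb k1 -> cb k2 -> (forall z, K z -> k1 z <= k2 z) ->
  phi k1 <= phi k2.
Proof.
move=> h1 h2 le12.
have := phi_ge0 (cb_lin (-1) h1 h2).
rewrite phi_lin // => /(_ _).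
have H : forall z, K z -> 0 <= -1 * k1 z + k2 z.
  by move=> z Kz; have := le12 z Kz; lra.
move=> /(_ H); lra.
Qed.

Lemma phi_inv t {k} : cb k -> phi (k \o T t) = phi k.
Proof.
move=> hk; rewrite /phi.
have -> : fk (k \o T t) = ltrans mul t (fk k).
  by apply: funext => s; rewrite /fk /ltrans Tmul.
exact: (proj2 (proj2 (proj2 lim)) t _ (fk_LUC hk)).
Qed.

Definition bump (y : M) (r : R) (z : M) : R := Num.max 0 (r - mdist y z).

Lemma max_lip (a b d : R) : a - b <= d -> b - a <= d ->
  `|Num.max 0 a - Num.max 0 b| <= d.
Proof.
move=> h1 h2; rewrite ler_norml.
have [ha|ha] := leP 0 a; have [hb|hb] := leP 0 b;
  rewrite ?(max_r ha) ?(max_r hb) ?(max_l (ltW ha)) ?(max_l (ltW hb));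
  apply/andP; split; lra.
Qed.

Lemma bump_lip y r z z' : `|bump y r z - bump y r z'| <= mdist z z'.
Proof.
apply: max_lip.
  have := metric_triangle y z z'; lra.
have := metric_triangle y z' z; rewrite (metric_sym z' z); lra.
Qed.

Lemma bump_ge0 y r z : 0 <= bump y r z.
Proof. by rewrite /bump le_max lexx. Qed.

Lemma cb_bump y r : 0 <= r -> cb (bump y r).
Proof.
move=> r0; split.
  move=> z; apply/cvgrPdist_lt => eps e0.
  apply: filterS (nbhsx_ballx z eps e0) => z'.
  rewrite ballEmdist /= => hz.
  exact: le_lt_trans (bump_lip y r z z') hz.
exists r => z; rewrite ger0_norm ?bump_ge0 // /bump ge_max r0 /=.
by have := mdist_ge0 y z; lra.
Qed.

Definition Fs := [set y | K y /\ forall r, 0 < r -> 0 < phi (bump y r)].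

Lemma bump_mono y y' r z : mdist y y' < r / 2 -> bump y' (r / 2) z <= bump y r z.
Proof.
move=> d; rewrite /bump ge_max le_max lexx /= le_max.
have := metric_triangle y y' z => t.
by apply/orP; right; lra.
Qed.

Lemma Kclosed : closed K.
Proof. exact: compact_closed (@metric_hausdorff R M) cK. Qed.

Lemma Fs_closed : closed Fs.
Proof.
move=> y cly; split.
  by apply: Kclosed; apply: closure_subset cly => z [].
move=> r r0; have r2 : 0 < r / 2 by rewrite divr_gt0.
have [y' [[Ky' Fy'] bl]] := cly _ (nbhsx_ballx y (r / 2) r2).
move: bl; rewrite ballEmdist /= => bl.
apply: lt_le_trans (Fy' _ r2) _.
apply: phi_le; [exact: cb_bump (ltW r2)| exact: cb_bump (ltW r0)|].
by move=> z _; exact: bump_mono.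
Qed.

Lemma cover (C : set M) : compact C ->
  (forall z, C z -> exists2 r, 0 < r & phi (bump z r) <= 0) ->
  exists H, [/\ cb H, (forall z, 0 <= H z), phi H <= 0 &
    exists2 c, 0 < c & forall z, C z -> c <= H z].
Proof.
move=> cC hC; apply: contrapT => nH.
pose D := [set p : (M -> R) * R | [/\ cb p.1, (forall z, 0 <= p.1 z), phi p.1 <= 0 & 0 < p.2]].
pose B := fun p : (M -> R) * R => C `&` [set z | p.1 z < p.2].
have D0 : D ((fun _ => 0), 1).
  by split => //=; [exact: cb_cst | rewrite phi0].
have FF : Filter (filter_from D B).
  apply: filter_from_filter; first by exists ((fun _ => 0), 1).
  move=> [H1 c1] [H2 c2] [h1 p1 f1 c1p] [h2 p2 f2 c2p].
  exists ((fun z => 1 * H1 z + H2 z), Num.min c1 c2).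
    split => /=.
    - exact: cb_lin.
    - move=> z; have q1 := p1 z; have q2 := p2 z; rewrite mul1r; exact: addr_ge0.
    - rewrite phi_lin //; lra.
    - by rewrite lt_min c1p c2p.
  move=> z [Cz /=]; rewrite lt_min => /andP [l1 l2].
  have q1 : 0 <= H1 z := p1 z; have q2 : 0 <= H2 z := p2 z.
  by split; split => //=; lra.
have PF : ProperFilter (filter_from D B).
  apply: filter_from_proper => // -[H c] [hH pH fH c0].
  apply: contrapT => nB; apply: nH; exists H; split => //; exists c => // z Cz.
  rewrite leNgt; apply/negP => Hz; apply: nB; by exists z.
have FC : filter_from D B C by exists ((fun _ => 0), 1) => // z [].
have [z [Cz clz]] := cC _ PF FC.
have [r r0 fr] := hC z Cz.
have r2 : 0 < r / 2 by rewrite divr_gt0.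
have FB : filter_from D B (B (bump z r, r / 2)).
  exists (bump z r, r / 2) => //; split => //=; [exact: cb_bump (ltW r0) | exact: bump_ge0].
have [w [[_ /= bw] dw]] := clz _ _ FB (nbhsx_ballx z (r / 2) r2).
move: dw; rewrite ballEmdist /= => dw.
move: bw; rewrite /bump.
have : r - mdist z w <= Num.max 0 (r - mdist z w) by rewrite le_max lexx orbT.
lra.
Qed.

Lemma vanish k : cb k -> (forall z, K z -> 0 <= k z) ->
  (forall z, Fs z -> k z <= 0) -> phi k <= 0.
Proof.
move=> hk pos vF; apply/unstable.ler_gtP => e e0.
have [kc [B hB]] := hk.
have B0 : 0 <= B := le_trans (normr_ge0 _) (hB x).
pose C := K `&` [set z | e <= k z].
have cC : compact C.
  apply: (@compact_closedI _ K [set z | e <= k z] cK).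
  exact: (proj1 (continuous_closedP (k : M -> R^o)) kc [set u : R^o | e <= u] (@closed_ge R e)).
have hC : forall z, C z -> exists2 r, 0 < r & phi (bump z r) <= 0.
  move=> z [Kz ez]; apply: contrapT => nr.
  have Fz : Fs z.
    split => // r r0; rewrite ltNge; apply/negP => h; apply: nr; by exists r.
  have := vF z Fz; move: ez => /=; lra.
have [H [hH pH fH [c c0 hc]]] := @cover C cC hC.
have q0 : 0 <= B / c by rewrite divr_ge0 // ltW.
have qc : B / c * c = B by rewrite divfK // gt_eqF.
have le1 := @phi_le k _ hk (cb_lin (B / c) hH (cb_cst e)).
have : phi k <= phi (fun z => B / c * H z + (fun _ => e) z).
  apply: le1 => z Kz.
  have kB : k z <= B by have := hB z; rewrite ler_norml => /andP [_ ?].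
  have H0 := pH z.
  have [ez|ez] := leP e (k z).
    have := hc z (conj Kz ez); nra.
  nra.
rewrite phi_lin // ?phi_cst; last exact: cb_cst.
nra.
Qed.

Lemma Fs_nonempty : Fs !=set0.
Proof.
apply: contrapT => nF.
have := @vanish (fun _ => 1) (cb_cst 1).
have h1 : forall z, K z -> 0 <= (1 : R) by move=> *; exact: ler01.
have h2 : forall z, Fs z -> (1 : R) <= 0 by move=> z Fz; exfalso; apply: nF; exists z.
move=> /(_ h1 h2); rewrite phi1; lra.
Qed.

Lemma Fs_inv t : Fs `<=` T t @` Fs.
Proof.
move=> y [Ky Fy]; apply: contrapT => nZ.
have cF : compact Fs := subclosed_compact Fs_closed cK (fun z (h : Fs z) => proj1 h).
have cZ : compact (T t @` Fs) := continuous_compact (@continuous_subspaceT _ _ Fs (T t) (Tcont_zA t)) cF.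
have clZ := compact_closed (@metric_hausdorff R M) cZ.
have nb : nbhs y (~` (T t @` Fs)) := open_nbhs_nbhs (conj (closed_openC clZ) nZ).
have [r r0 br] := proj1 (nbhs_ballP _ _) nb.
have h := @vanish _ (cb_comp t (@cb_bump y r (ltW r0))).
have h1 : forall z, K z -> 0 <= (bump y r \o T t) z by move=> z _; exact: bump_ge0.
have h2 : forall z, Fs z -> (bump y r \o T t) z <= 0.
  move=> z Fz; rewrite /= /bump ge_max lexx /=.
  have : ~ ball y r (T t z) by move=> /br; apply; exists z.
  rewrite ballEmdist /= => /negP; rewrite -leNgt => hh.
  by rewrite subr_le0.
move: (h h1 h2); rewrite phi_inv; last exact: cb_bump (ltW r0).
have := Fy r r0; lra.
Qed.
End Amen.

Theorem lemma3p13 (R : realType) (M : metricType R)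
  (S : topologicalType) (mul : S -> S -> S) (T : S -> M -> M) :
  semitopological_semigroup mul ->
  (left_reversible mul \/ left_amenable R mul) ->
  (forall s t : S, T (mul s t) = T s \o T t) ->
  continuous (fun p : S * M => T p.1 p.2) ->
  (exists G : set (M -> M), (forall g, G g -> unif_asymp_regular g) /\
     [set f | exists s, f = T s] = gen_semigroup G) ->
  forall K : set M, K !=set0 -> compact K -> (forall s, T s @` K `<=` K) ->
  exists2 x, K x & forall s, T s x = x.
Proof.
move=> semi hyp Tmul Tcont hG K K0 cK inv.
have [x Kx] := K0.
have [[s0 _]|nS] := pselect (exists s : S, True); last first.
  by exists x => // s; exfalso; apply: nS; exists s.
have [F [FK F0 Finv]] : exists F : set M,
    [/\ F `<=` K, F !=set0 & forall t, F `<=` T t @` F].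
  case: hyp => [rev | [mu lim]].
    exact: (@rev_K0 R M S mul T Tmul Tcont s0 K x semi rev Kx cK inv).
  exists (@Fs R M S T mu K x); split.
  - by move=> z [].
  - exact: (@Fs_nonempty R M S mul T Tmul Tcont mu K x lim Kx cK inv).
  - move=> t; exact: (@Fs_inv R M S mul T Tmul Tcont mu K x lim Kx cK inv t).
have [y Fy fixy] := @end_fix R M S T F hG F0 Finv.
by exists y => //; apply: FK.
Qed.
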